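(* Assume $M$ is projective in $\sigma[M]$ and let $X\in\sigma[M]$. (i) If $P\subsetneq X$ is an $M$-prime submodule of $X$, then $X/P$ is an $M$-prime module. (ii) For an $M$-ideal $P\subsetneq M$, the following are equivalent: (1) $P$ is a prime $M$-ideal; (2) $P$ is an $M$-prime submodule of $M$; (3) $M/P$ is an $M$-prime module.
   Context: $R$ is a ring with identity, modules are unital left $R$-modules, $M$ is a fixed left $R$-module. $\sigma[M]$ is the full subcategory of $R$-modules isomorphic to submodules of $M$-generated modules. $\mathrm{Ann}_M(X):=\bigcap_{f\in\mathrm{Hom}_R(M,X)}\ker f$. For $N\le M$ and a module $X$, $N\cdot X$ is the intersection of the kernels of all homomorphisms $X\to W$ where $W$ ranges over modules with $f(N)=0$ for all $f\in\mathrm{Hom}_R(M,W)$ (for $Y\le X$, $N\cdot Y$ is formed regarding $Y$ as a module). A submodule $N\le M$ is an $M$-ideal if $N$ is the intersection of the kernels of all homomorphisms from $M$ into modules of some class $\mathcal C$. A proper submodule $P$ of $X$ is $M$-prime if for all $N\le M$, $Y\le X$, $N\cdot Y\subseteq P$ implies $N\cdot X\subseteq P$ or $Y\subseteq P$; $X$ is an $M$-prime module if $X\ne0$ and $(0)$ is $M$-prime in $X$. A proper $M$-ideal $P$ is a prime $M$-ideal if $P=\mathrm{Ann}_M(X)$ for some $M$-prime module $X$. *)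

(* Defs.v *)
(* Left R-modules are [lmodType R] over [R : pzRingType]
   (a ring with identity, not necessarily commutative). Submodules are
   represented as predicates [A -> Prop] satisfying [submod]. *)
From HB Require Import structures.
From mathcomp Require Import all_boot all_order all_algebra.
Set Implicit Arguments. Unset Strict Implicit. Unset Printing Implicit Defensive.
Import GRing.Theory.
Local Open Scope ring_scope.

Section ModuleDefs.
Variable R : pzRingType.

Definition hom (A B : lmodType R) (f : A -> B) : Prop :=
  forall (a : R) (x y : A), f (a *: x + y) = a *: f x + f y.

(* maps that are R-linear on the submodule Y (= homomorphisms Y -> B;
   the values outside Y are irrelevant) *)
Definition hom_on (A B : lmodType R) (Y : A -> Prop) (f : A -> B) : Prop :=
  forall (a : R) (x y : A), Y x -> Y y -> f (a *: x + y) = a *: f x + f y.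

Definition submod (A : lmodType R) (N : A -> Prop) : Prop :=
  N 0 /\ forall (a : R) (x y : A), N x -> N y -> N (a *: x + y).

Definition subset (A : lmodType R) (N N' : A -> Prop) : Prop :=
  forall x, N x -> N' x.

Definition proper_submod (A : lmodType R) (P : A -> Prop) : Prop :=
  submod P /\ exists x, ~ P x.

(* G is M-generated: G is the sum of the images of all homomorphisms M -> G
   (equivalently, an epimorphic image of a direct sum of copies of M). *)
Definition M_generated (M G : lmodType R) : Prop :=
  forall g : G, exists (n : nat) (fs : 'I_n -> M -> G) (ms : 'I_n -> M),
    (forall i, hom (fs i)) /\ g = \sum_(i < n) fs i (ms i).

(* X ∈ σ[M]: X is isomorphic to a submodule of an M-generated module,
   i.e. there is a monomorphism X -> G with G M-generated. *)
Definition in_sigma (M X : lmodType R) : Prop :=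
  exists (G : lmodType R) (e : X -> G),
    M_generated M G /\ hom e /\ injective e.

Definition projective_in_sigma (M : lmodType R) : Prop :=
  forall (A B : lmodType R) (g : A -> B) (f : M -> B),
    in_sigma M A -> in_sigma M B ->
    hom g -> (forall b, exists a, g a = b) -> hom f ->
    exists h : M -> A, hom h /\ forall m, g (h m) = f m.

Definition Ann (M X : lmodType R) : M -> Prop :=
  fun m => forall f : M -> X, hom f -> f m = 0.

Definition kills (M : lmodType R) (N : M -> Prop) (W : lmodType R) : Prop :=
  forall f : M -> W, hom f -> forall n, N n -> f n = 0.

(* N·Y for a submodule Y of X, computed regarding Y as a module:
   intersection of the kernels of all homomorphisms Y -> W with W
   annihilated by N. *)
Definition prodM (M : lmodType R) (N : M -> Prop) (X : lmodType R)
    (Y : X -> Prop) : X -> Prop :=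
  fun x => Y x /\ forall (W : lmodType R), kills N W ->
    forall g : X -> W, hom_on Y g -> g x = 0.

Definition fullset (X : lmodType R) : X -> Prop := fun _ => True.

Definition M_ideal (M : lmodType R) (N : M -> Prop) : Prop :=
  exists C : lmodType R -> Prop,
    forall m, N m <-> (forall (W : lmodType R), C W ->
                         forall f : M -> W, hom f -> f m = 0).

Definition M_prime_sub (M X : lmodType R) (P : X -> Prop) : Prop :=
  proper_submod P /\
  forall (N : M -> Prop) (Y : X -> Prop), submod N -> submod Y ->
    subset (prodM N Y) P ->
    subset (prodM N (@fullset X)) P \/ subset Y P.

Definition M_prime_module (M X : lmodType R) : Prop :=
  (exists x : X, x <> 0) /\ M_prime_sub M (fun x : X => x = 0).

Definition prime_M_ideal (M : lmodType R) (P : M -> Prop) : Prop :=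
  M_ideal P /\ proper_submod P /\
  exists X : lmodType R, M_prime_module M X /\ forall m, P m <-> Ann X m.

(* q : X -> Q presents Q as the quotient X/P: q is an epimorphism with kernel P *)
Definition quotient_map (X Q : lmodType R) (P : X -> Prop) (q : X -> Q) : Prop :=
  hom q /\ (forall y, exists x, q x = y) /\ (forall x, q x = 0 <-> P x).

(* X/P is an M-prime module (stated for any model of the quotient X/P) *)
Definition quotient_M_prime (M X : lmodType R) (P : X -> Prop) : Prop :=
  forall (Q : lmodType R) (q : X -> Q), quotient_map P q -> M_prime_module M Q.

End ModuleDefs.

(* Main.v *)
Require Import Defs.
From HB Require Import structures.
From mathcomp Require Import all_boot all_order all_algebra.
From Stdlib Require Import Classical ClassicalEpsilon FunctionalExtensionality PropExtensionality.
Set Implicit Arguments. Unset Strict Implicit. Unset Printing Implicit Defensive.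
Import GRing.Theory.
Local Open Scope ring_scope.

Definition asb (P : Prop) : bool := if excluded_middle_informative P then true else false.
Lemma asbP (P : Prop) : asb P <-> P.
Proof. by rewrite /asb; case: excluded_middle_informative. Qed.

Section SubLemmas.
Variables (R : pzRingType) (A : lmodType R) (K : A -> Prop) (hK : submod K).
Lemma sm0 : K 0. Proof. by case: hK. Qed.
Lemma smD x y : K x -> K y -> K (x + y).
Proof. by move=> a b; have := hK.2 1 x y a b; rewrite scale1r. Qed.
Lemma smZ a x : K x -> K (a *: x).
Proof. by move=> a0; have := hK.2 a x 0 a0 sm0; rewrite addr0. Qed.
Lemma smN x : K x -> K (- x).
Proof. by move=> a0; have := smZ (-1) a0; rewrite scaleN1r. Qed.
Lemma smB x y : K x -> K y -> K (x - y).
Proof. by move=> a b; apply: smD a (smN b). Qed.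
End SubLemmas.

Section SQ.
Variables (R : pzRingType) (A : lmodType R) (S K : A -> Prop).
Variables (hS : submod S) (hK : submod K) (hKS : Defs.subset K S).

Definition canon (x : A) : A := epsilon (inhabits 0) (fun y => K (x - y)).
Lemma canonK x : K (x - canon x).
Proof. apply: (epsilon_spec (inhabits 0) (fun y => K (x - y))); exists x; rewrite subrr; exact: sm0. Qed.
Lemma canon_eq x y : K (x - y) -> canon x = canon y.
Proof.
move=> h; rewrite /canon; congr epsilon; apply: functional_extensionality => z.
apply: propositional_extensionality; split => hz.
- by have := smB hK hz h; congr K; rewrite opprB addrC addrA subrK.
- by have := smD hK h hz; congr K; rewrite addrA subrK.
Qed.
Lemma canon_id x : canon (canon x) = canon x.
Proof. by apply: canon_eq; have := smN hK (canonK x); rewrite opprB. Qed.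
Lemma canon_S x : S x -> S (canon x).
Proof.
move=> hx; have := smB hS hx (hKS (canonK x)); by rewrite opprB addrC subrK.
Qed.
Lemma canon_rel x y : K (x - y) -> K (canon x - y).
Proof.
move=> h; have := smB hK h (canonK x); congr K.
by rewrite opprB addrC -addrA addKr.
Qed.

Definition sqp (x : A) : bool := asb (S x) && (canon x == x).
Definition sqT (_ : submod S) (_ : submod K) (_ : Defs.subset K S) : Type := {x : A | sqp x}.
Local Notation T := (sqT hS hK hKS).
HB.instance Definition _ := Choice.copy T {x : A | sqp x}.

Lemma sqp_canon x : S x -> sqp (canon x).
Proof. by move=> hx; rewrite /sqp canon_id eqxx andbT; apply/asbP/canon_S. Qed.
Lemma sqS (u : T) : S (val u). Proof. by case: u => x /= /andP [/asbP]. Qed.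
Lemma sqc (u : T) : canon (val u) = val u. Proof. by case: u => x /= /andP [_ /eqP]. Qed.

Definition mk (x : A) : T :=
  match excluded_middle_informative (S x) with
  | left h => exist _ (canon x) (sqp_canon h)
  | right _ => exist _ (canon 0) (sqp_canon hS.1) end.
Lemma mkE x : S x -> val (mk x) = canon x.
Proof. by rewrite /mk; case: excluded_middle_informative. Qed.

Definition sq0 : T := mk 0.
Definition sqadd (u v : T) : T := mk (val u + val v).
Definition sqopp (u : T) : T := mk (- val u).
Definition sqscale (a : R) (u : T) : T := mk (a *: val u).

Lemma sqinj (u v : T) : val u = val v -> u = v.
Proof. exact: val_inj. Qed.

Lemma vadd u v : val (sqadd u v) = canon (val u + val v).
Proof. by rewrite mkE //; apply: (smD hS) (sqS u) (sqS v). Qed.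
Lemma vopp u : val (sqopp u) = canon (- val u).
Proof. by rewrite mkE //; apply: (smN hS) (sqS u). Qed.
Lemma vscale a u : val (sqscale a u) = canon (a *: val u).
Proof. by rewrite mkE //; apply: (smZ hS) (sqS u). Qed.
Lemma v0 : val sq0 = canon 0.
Proof. by rewrite mkE //; exact: hS.1. Qed.

Lemma kD x y x' y' : K (x - x') -> K (y - y') -> K ((x + y) - (x' + y')).
Proof. by move=> a b; have := smD hK a b; congr K; rewrite opprD addrACA. Qed.
Lemma kN x x' : K (x - x') -> K (- x - - x').
Proof. by move=> a; have := smN hK a; rewrite opprB opprK addrC. Qed.
Lemma kZ a x x' : K (x - x') -> K (a *: x - a *: x').
Proof. by move=> h; have := smZ hK a h; rewrite scalerBr. Qed.
Lemma kc x : K (canon x - x).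
Proof. by have := smN hK (canonK x); rewrite opprB. Qed.
Lemma kr x : K (x - x). Proof. by rewrite subrr; exact: sm0. Qed.

Lemma canonDl x y : canon (canon x + y) = canon (x + y).
Proof. by apply: canon_eq; apply: kD; [apply: kc | apply: kr]. Qed.
Lemma canonDr x y : canon (x + canon y) = canon (x + y).
Proof. by apply: canon_eq; apply: kD; [apply: kr | apply: kc]. Qed.
Lemma sqaddA : associative sqadd.
Proof.
by move=> u v w; apply: sqinj; rewrite !vadd canonDl canonDr addrA.
Qed.
Lemma sqaddC : commutative sqadd.
Proof. by move=> u v; apply: sqinj; rewrite !vadd addrC. Qed.
Lemma sqadd0 : left_id sq0 sqadd.
Proof.
move=> u; apply: sqinj; rewrite vadd v0 -{2}(sqc u); apply: canon_eq.
by rewrite -[val u in X in K (_ - X)]add0r; apply: kD; [apply: kc | apply: kr].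
Qed.
Lemma sqaddN : left_inverse sq0 sqopp sqadd.
Proof.
move=> u; apply: sqinj; rewrite vadd v0 vopp; apply: canon_eq.
by rewrite -(addNr (val u)); apply: kD; [apply: kc | apply: kr].
Qed.
HB.instance Definition _ := GRing.isZmodule.Build T sqaddA sqaddC sqadd0 sqaddN.

Lemma vaddE (u v : T) : val (u + v) = canon (val u + val v). Proof. exact: vadd. Qed.
Lemma v0E : val (0 : T) = canon 0. Proof. exact: v0. Qed.

Lemma canonZ a x : canon (a *: canon x) = canon (a *: x).
Proof. by apply: canon_eq; apply: kZ; apply: kc. Qed.
Lemma sqscaleA a b v : sqscale a (sqscale b v) = sqscale (a * b) v.
Proof. by apply: sqinj; rewrite !vscale canonZ scalerA. Qed.
Lemma sqscale1 : left_id 1 sqscale.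
Proof. move=> u; apply: sqinj; rewrite vscale scale1r; exact: sqc. Qed.
Lemma sqscaleDr : right_distributive sqscale +%R.
Proof.
by move=> a u v; apply: sqinj; rewrite /= vscale vaddE vaddE !vscale canonZ canonDl canonDr scalerDr.
Qed.
Lemma sqscaleDl v : {morph sqscale^~ v: a b / a + b}.
Proof.
by move=> a b; apply: sqinj; rewrite /= vaddE !vscale canonDl canonDr scalerDl.
Qed.
HB.instance Definition _ := GRing.Zmodule_isLmodule.Build R T sqscaleA sqscale1 sqscaleDr sqscaleDl.

Lemma vscaleE a (u : T) : val (a *: u) = canon (a *: val u). Proof. exact: vscale. Qed.

Lemma mk_hom_on : hom_on S mk.
Proof.
move=> a x y hx hy; have hxy : S (a *: x + y) := hS.2 a x y hx hy.
apply: sqinj; rewrite vaddE vscaleE !mkE // canonDl canonDr; apply: canon_eq.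
apply: kD; [apply: kZ; apply: canonK | apply: kr].
Qed.
Lemma mk_val (u : T) : mk (val u) = u.
Proof. by apply: sqinj; rewrite mkE ?sqc //; apply: sqS. Qed.
Lemma mk0 x : S x -> (mk x = 0 <-> K x).
Proof.
move=> hx; split.
- move=> h; have : val (mk x) = val (0 : T) by rewrite h.
  rewrite mkE // v0E => e.
  have := smD hK (canonK x) (canon_rel (kr 0)); rewrite e; rewrite subr0 subrK. by [].
- move=> hx0; apply: sqinj; rewrite mkE // v0E; apply: canon_eq; by rewrite subr0.
Qed.
End SQ.
Section Main.
Variable R : pzRingType.
Implicit Types A B C X M W : lmodType R.

Lemma hom0 A B (f : A -> B) : Defs.hom f -> f 0 = 0.
Proof.
move=> hf; have h := hf 1 0 0; rewrite scaler0 addr0 scale1r in h.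
by apply: (addrI (f 0)); rewrite addr0 -h.
Qed.
Lemma homD A B (f : A -> B) x y : Defs.hom f -> f (x + y) = f x + f y.
Proof. by move=> hf; have := hf 1 x y; rewrite !scale1r. Qed.
Lemma homZ A B (f : A -> B) a x : Defs.hom f -> f (a *: x) = a *: f x.
Proof. by move=> hf; have := hf a x 0; rewrite !addr0 (hom0 hf) addr0. Qed.
Lemma homB A B (f : A -> B) x y : Defs.hom f -> f (x - y) = f x - f y.
Proof. by move=> hf; rewrite homD // -scaleN1r homZ // scaleN1r. Qed.
Lemma hom_comp A B C (f : A -> B) (g : B -> C) : Defs.hom f -> Defs.hom g -> Defs.hom (g \o f).
Proof. by move=> hf hg a x y /=; rewrite hf hg. Qed.
Lemma hom_id A : Defs.hom (@id A). Proof. by []. Qed.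

Definition Z0 A : A -> Prop := fun x => x = 0.
Lemma submod0 A : submod (@Z0 A).
Proof. by split; [| move=> a x y -> ->; rewrite scaler0 addr0]. Qed.
Lemma submodT A : submod (@fullset R A). Proof. by []. Qed.
Lemma sub0 A (S : A -> Prop) (hS : submod S) : Defs.subset (@Z0 A) S.
Proof. by move=> x ->; case: hS. Qed.
Lemma subT A (K : A -> Prop) : Defs.subset K (@fullset R A). Proof. by []. Qed.

Definition SubM A (S : A -> Prop) (hS : submod S) : lmodType R :=
  sqT hS (submod0 A) (sub0 hS).
Definition QuotM A (K : A -> Prop) (hK : submod K) : lmodType R :=
  sqT (submodT A) hK (@subT A K).
Definition smk A (S : A -> Prop) (hS : submod S) (x : A) : SubM hS := mk hS (submod0 A) (sub0 hS) x.
Definition qmk A (K : A -> Prop) (hK : submod K) (x : A) : QuotM hK := mk (submodT A) hK (@subT A K) x.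
Definition sv A (S : A -> Prop) (hS : submod S) (u : SubM hS) : A := val u.
Definition qv A (K : A -> Prop) (hK : submod K) (u : QuotM hK) : A := val u.

Section SubL.
Variables (A : lmodType R) (S : A -> Prop) (hS : submod S).
Lemma canon_Z0 x : @canon R A (@Z0 A) x = x.
Proof.
have := canonK (submod0 A) x; rewrite /Z0 => /eqP; rewrite subr_eq0 => /eqP.
by [].
Qed.
Lemma sv_hom : Defs.hom (@sv A S hS).
Proof. by move=> a u v; rewrite /sv vaddE vscaleE !canon_Z0. Qed.
Lemma sv_inj (u v : SubM hS) : sv u = sv v -> u = v.
Proof. exact: sqinj. Qed.
Lemma sv_S (u : SubM hS) : S (sv u).
Proof. exact: sqS. Qed.
Lemma smkK x : S x -> sv (smk hS x) = x.
Proof. by move=> hx; rewrite /sv /smk mkE // canon_Z0. Qed.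
Lemma svK (u : SubM hS) : smk hS (sv u) = u.
Proof. exact: mk_val. Qed.
Lemma smk_hom_on : hom_on S (smk hS).
Proof. exact: mk_hom_on. Qed.
Lemma smk0 x : S x -> smk hS x = 0 -> x = 0.
Proof. by move=> hx /(mk0 hS (submod0 A) (sub0 hS) hx). Qed.
Lemma smk_0 : smk hS 0 = 0.
Proof. by apply/(mk0 hS (submod0 A) (sub0 hS) hS.1). Qed.
End SubL.

Section QuotL.
Variables (A : lmodType R) (K : A -> Prop) (hK : submod K).
Lemma qmk_hom : Defs.hom (qmk hK).
Proof. by move=> a x y; apply: (mk_hom_on (submodT A) hK (@subT A K)). Qed.
Lemma qvK (u : QuotM hK) : qmk hK (qv u) = u.
Proof. exact: mk_val. Qed.
Lemma qmk0 x : qmk hK x = 0 <-> K x.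
Proof. exact: (mk0 (submodT A) hK (@subT A K)). Qed.
Lemma qv_hom_kill B (g : A -> B) : Defs.hom g -> (forall k, K k -> g k = 0) ->
  Defs.hom (g \o @qv A K hK).
Proof.
move=> hg gK.
have gc z : g (canon K z) = g z.
  have := gK _ (canonK hK z); rewrite homB // => /eqP; rewrite subr_eq0 => /eqP.
  by move=> ->.
move=> a u v /=; rewrite /qv vaddE vscaleE canonDl; last exact: hK.
by rewrite gc hg.
Qed.
End QuotL.

Lemma lift_in M A (N : M -> Prop) (Y : A -> Prop) (h : M -> A) n :
  Defs.hom h -> (forall m, Y (h m)) -> N n -> prodM N Y (h n).
Proof.
move=> hh hY Nn; split => // W kW g hg; apply: (kW (g \o h)) => // a x y /=.
by rewrite hh hg.
Qed.

Lemma push M X (N : M -> Prop) (g : M -> X) m :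
  Defs.hom g -> prodM N (@fullset R M) m -> prodM N (@fullset R X) (g m).
Proof.
move=> hg [_ Hm]; split => // W kW g' hg'; apply: (Hm W kW (g' \o g)) => a x y _ _ /=.
by rewrite hg hg'.
Qed.

Definition imgY M X (f : M -> X) (Y : M -> Prop) : X -> Prop :=
  fun x => exists y, Y y /\ x = f y.
Lemma imgY_sub M X (f : M -> X) (Y : M -> Prop) : Defs.hom f -> submod Y -> submod (imgY f Y).
Proof.
move=> hf [Y0 YD]; split; first by exists 0; split => //; rewrite hom0.
move=> a _ _ [x [Yx ->]] [y [Yy ->]]; exists (a *: x + y); split; first exact: YD.
by rewrite hf.
Qed.

Lemma imgY_full M X (f : M -> X) (Y : M -> Prop) x : imgY f Y x -> imgY f (@fullset R M) x.
Proof. by case=> y [_ ->]; exists y. Qed.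

Lemma gen_img M X (f : M -> X) (hf : Defs.hom f) :
  M_generated M (SubM (imgY_sub hf (submodT M))).
Proof.
move=> b; have [m [_ hm]] := sv_S b.
exists 1%N, (fun _ m => smk (imgY_sub hf (submodT M)) (f m)), (fun _ => m); split.
  move=> i a x y; rewrite hf smk_hom_on //; [exists x | exists y]; by [].
by rewrite big_ord1 -hm svK.
Qed.

Lemma in_sigma_img M X (f : M -> X) (Y : M -> Prop) (hf : Defs.hom f) (hY : submod Y) :
  in_sigma M (SubM (imgY_sub hf hY)).
Proof.
pose hG := imgY_sub hf (submodT M).
exists (SubM hG), (fun u => smk hG (sv u)); split; first exact: gen_img.
split.
  move=> a u v; rewrite sv_hom smk_hom_on //; apply: imgY_full; exact: sv_S.
move=> u v h; apply: sv_inj; have := congr1 (@sv _ _ hG) h.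
by rewrite !smkK //; apply: imgY_full; exact: sv_S.
Qed.

Lemma in_sigma_self M : in_sigma M M.
Proof.
exists M, id; split; last by split.
move=> m; exists 1%N, (fun _ => id), (fun _ => m); split => //.
by rewrite big_ord1.
Qed.

Lemma in_sigma_sub M X (S : X -> Prop) (hS : submod S) : in_sigma M X -> in_sigma M (SubM hS).
Proof.
move=> [G [e [Gg [he hi]]]]; exists G, (fun u => e (sv u)); split => //; split.
  by move=> a u v; rewrite sv_hom he.
by move=> u v /hi /sv_inj.
Qed.

End Main.
Section Parts.
Variable R : pzRingType.
Implicit Types A B X M Q W : lmodType R.

Lemma part_i M X (P : X -> Prop) :
  projective_in_sigma M -> in_sigma M X -> M_prime_sub M P -> quotient_M_prime M P.
Proof.
move=> proj sX [[hP [x0 nx0]] Hpr] Q q [qh [qs qk]].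
have q0 : q 0 = 0 := hom0 qh.
have qx0 : q x0 <> 0 by move/qk.
split; first by exists (q x0).
split; first by split; [exact: (submod0 Q) | exact: (ex_intro _ (q x0) qx0)].
move=> N Y' hN hY' HNY.
pose Y := fun x => Y' (q x).
have hY : submod Y.
  split; first by rewrite /Y q0; case: hY'.
  by move=> a x y; rewrite /Y qh; apply: hY'.2.
have HY : Defs.subset (prodM N Y) P.
  move=> x [Yx Hx]; apply/qk; apply: HNY; split => // W kW g hg.
  apply: (Hx W kW (g \o q)) => a u v Yu Yv /=; rewrite qh; exact: hg.
case: (Hpr N Y hN hY HY) => [HNX|HYP]; [left|right]; last first.
  move=> y Yy; have [x qx] := qs y; rewrite -qx; apply/qk; apply: HYP.
  by rewrite /Y qx.
have kQ : kills N Q.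
  move=> f hf n Nn.
  pose hSB := imgY_sub hf (submodT M).
  pose SA := fun x => imgY f (@fullset R M) (q x).
  have hSA : submod SA.
    split; first by rewrite /SA q0; case: hSB.
    by move=> a x y; rewrite /SA qh; apply: hSB.2.
  pose p := fun u : SubM hSA => smk hSB (q (sv u)).
  pose f' := fun m => smk hSB (f m).
  have hp : Defs.hom p.
    move=> a u v; rewrite /p sv_hom qh smk_hom_on //; [exact: (sv_S u) | exact: (sv_S v)].
  have sp : forall b, exists a, p a = b.
    move=> b; have [x qx] := qs (sv b).
    have Sx : SA x by rewrite /SA qx; exact: sv_S.
    by exists (smk hSA x); rewrite /p smkK // qx svK.
  have hf' : Defs.hom f'.
    by move=> a x y; rewrite /f' hf smk_hom_on //; [exists x | exists y].
  have [h [hh Hh]] := proj _ _ p f' (in_sigma_sub hSA sX) (in_sigma_img hf (submodT M)) hp sp hf'.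
  have Pn : P (sv (h n)).
    apply: HNX; apply: (lift_in (Y := @fullset R X) (h := fun m => sv (h m))) => //.
    exact: hom_comp hh (@sv_hom _ _ _ hSA).
  have : f' n = 0 by rewrite -Hh /p (proj2 (qk _) Pn) smk_0.
  by apply: smk0; exists n.
move=> y [_ Hy]; exact: (Hy Q kQ id (fun a u v _ _ => erefl)).
Qed.
End Parts.
Section Parts2.
Variable R : pzRingType.
Implicit Types A B X M Q W : lmodType R.

Lemma one_two M (P : M -> Prop) :
  projective_in_sigma M -> prime_M_ideal P -> M_prime_sub M P.
Proof.
move=> proj [_ [hPp [X [[[x0 nx0] [_ HX]] HPA]]]].
split => // N Y hN hY HNY.
case: (classic (Defs.subset Y P)) => [|nYP]; [by right|left].
have [y [Yy nPy]] : exists y, Y y /\ ~ P y.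
  apply: NNPP => H; apply: nYP => y Yy; apply: NNPP => nPy; apply: H; by exists y.
have [f [hf fy]] : exists f : M -> X, Defs.hom f /\ f y <> 0.
  apply: NNPP => H; apply: nPy; apply/HPA => f hf; apply: NNPP => fy; apply: H.
  by exists f.
pose hZ := imgY_sub hf hY.
have HZ : Defs.subset (prodM N (imgY f Y)) (fun x => x = 0).
  move=> z [Zz Hz].
  have kB : kills N (SubM hZ).
    move=> h hh n Nn.
    pose p := fun u : SubM hY => smk hZ (f (sv u)).
    have hp : Defs.hom p.
      move=> a u v; rewrite /p sv_hom hf smk_hom_on //.
        by exists (sv u); split => //; exact: (sv_S u).
      by exists (sv v); split => //; exact: (sv_S v).
    have sp : forall b, exists a, p a = b.
      move=> b; have [y' [Yy' hb]] := sv_S b.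
      by exists (smk hY y'); rewrite /p smkK // -hb svK.
    have [h' [hh' Hh]] := proj _ _ p h (in_sigma_sub hY (in_sigma_self M))
      (in_sigma_img hf hY) hp sp hh.
    have Pn : P (sv (h' n)).
      apply: HNY; apply: (lift_in (h := fun m => sv (h' m))) => //.
        exact: hom_comp hh' (@sv_hom _ _ _ hY).
      move=> m; exact: (sv_S (h' m)).
    by rewrite -Hh /p (proj1 (HPA _) Pn f hf) smk_0.
  have := Hz (SubM hZ) kB (smk hZ) (@smk_hom_on _ _ _ hZ).
  by apply: smk0.
case: (HX N (imgY f Y) hN hZ HZ) => [HNX|HZ0].
  move=> m Hm; apply/HPA => g hg; apply: HNX; exact: push.
by exfalso; apply: fy; apply: HZ0; exists y.
Qed.

Lemma three_one M (P : M -> Prop) :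
  M_ideal P -> proper_submod P -> quotient_M_prime M P -> prime_M_ideal P.
Proof.
move=> hI hPp HQ; split => //; split => //.
have hP := hPp.1.
exists (QuotM hP); split.
  apply: (HQ _ (qmk hP)); split; first exact: qmk_hom.
  split; last by move=> x; exact: qmk0.
  by move=> y; exists (qv y); exact: qvK.
move=> m; split.
  move=> Pm f hf; rewrite -(qvK (f m)); apply/qmk0.
  have [C HC] := hI.
  apply/HC => W CW g hg.
  have gK : forall k, P k -> g k = 0 by move=> k /HC Hk; exact: Hk.
  have hgb := qv_hom_kill (hK:=hP) hg gK.
  exact: ((proj1 (HC m)) Pm W CW _ (hom_comp hf hgb)).
move=> Am; apply/(qmk0 hP); exact: Am _ (qmk_hom hP).
Qed.
End Parts2.

Unset Implicit Arguments.
Set Strict Implicit.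
Local Close Scope ring_scope.

Theorem proposition2p10 (R : pzRingType) (M : lmodType R) :
  projective_in_sigma M ->
  (forall (X : lmodType R) (P : X -> Prop),
      in_sigma M X -> M_prime_sub M P -> quotient_M_prime M P) /\
  (forall P : M -> Prop,
      M_ideal P -> proper_submod P ->
      (prime_M_ideal P <-> M_prime_sub M P) /\
      (M_prime_sub M P <-> quotient_M_prime M P)).
Proof.
move=> proj; split; first by move=> X P; exact: part_i.
move=> P hI hPp.
have h23 : M_prime_sub M P -> quotient_M_prime M P := part_i proj (in_sigma_self M).
split; split.
- exact: one_two.
- by move=> h; apply: three_one => //; exact: h23.
- exact: h23.
- by move=> h; apply: one_two => //; exact: three_one.
Qed.
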